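(* Let $\alpha\in\mathbb T$ and $\varepsilon>0$. The set $S=\{n\in\mathbb N:\|n\alpha\|>\varepsilon\}$ is not $2$-large.
   Context: $\|t\|$ is the distance from $t$ to the nearest integer. For $r\ge2$, a set $R\subset\mathbb N$ is $r$-large if for every coloring of $\mathbb N$ with $r$ colors and every length $L$ there is a monochromatic arithmetic progression $a,a+n,\dots,a+(L-1)n$ with $n\in R$. *)

(* Defs.v *)
From Stdlib Require Import Reals.
Open Scope R_scope.

Definition dist_nearest_int (t : R) : R :=
  Rmin (frac_part t) (1 - frac_part t).

Definition r_large (r : nat) (Rset : nat -> Prop) : Prop :=
  forall (c : nat -> nat), (forall x, (c x < r)%nat) ->
  forall L : nat, exists a n : nat,
    (1 <= a)%nat /\ Rset n /\
    forall i : nat, (i < L)%nat -> c (a + i * n)%nat = c a.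

Definition S_set (alpha eps : R) (n : nat) : Prop :=
  (1 <= n)%nat /\ dist_nearest_int (INR n * alpha) > eps.

(* Main.v *)
Require Import Defs.
From Stdlib Require Import Reals Lra Lia ZArith.
Open Scope R_scope.

Lemma frac_add_cases (u v : R) :
  frac_part (u + v) = frac_part u + frac_part v \/
  frac_part (u + v) = frac_part u + frac_part v - 1.
Proof.
  destruct (Rlt_dec (frac_part u + frac_part v) 1) as [H|H].
  - left; apply plus_frac_part2; exact H.
  - right; apply plus_frac_part1; lra.
Qed.

Theorem mainTheorem17 (alpha eps : R) (Heps : 0 < eps) :
  ~ r_large 2 (S_set alpha eps).
Proof.
  intros Hl.
  set (f := fun x : nat => frac_part (INR x * alpha)).
  set (c := fun x : nat => if Rlt_dec (f x) (1/2) then 0%nat else 1%nat).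
  assert (Hc : forall x, (c x < 2)%nat).
  { intro x; unfold c; destruct (Rlt_dec _ _); lia. }
  set (N := Z.to_nat (up (/ eps))).
  assert (HN : INR N >= / eps).
  { destruct (archimed (/ eps)) as [H1 _].
    assert (Hp : (0 <= up (/ eps))%Z).
    { apply le_IZR. pose proof (Rinv_0_lt_compat _ Heps). simpl; lra. }
    unfold N. rewrite INR_IZR_INZ, Z2Nat.id by exact Hp. lra. }
  destruct (Hl c Hc (S N)) as [a [n [Ha [[Hn Hd] Hap]]]].
  unfold dist_nearest_int, Rmin in Hd.
  set (b := frac_part (INR n * alpha)) in *.
  assert (Hb : eps < b /\ b < 1 - eps).
  { destruct (Rle_dec b (1 - b)); lra. }
  set (d := if Rlt_dec b (1/2) then b else b - 1).
  assert (Hdabs : Rabs d > eps).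
  { unfold d; destruct (Rlt_dec b (1/2)).
    - rewrite Rabs_right; lra.
    - rewrite Rabs_left; lra. }
  assert (Hsame : forall x y, c x = c y -> Rabs (f x - f y) < 1/2).
  { intros x y Hxy. pose proof (base_fp (INR x * alpha)).
    pose proof (base_fp (INR y * alpha)). unfold c in Hxy. fold (f x) (f y) in *.
    destruct (Rlt_dec (f x) (1/2)); destruct (Rlt_dec (f y) (1/2));
      try discriminate; apply Rabs_def1; unfold f in *; lra. }
  assert (Hstep : forall y, c (y + n)%nat = c y -> f (y + n)%nat = f y + d).
  { intros y Hy. pose proof (Hsame _ _ Hy) as Hs.
    unfold f in *. rewrite plus_INR, Rmult_plus_distr_r in *.
    fold b in Hs |- *.
    destruct (frac_add_cases (INR y * alpha) (INR n * alpha)) as [E|E];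
      fold b in E; rewrite E in Hs |- *; unfold d;
      destruct (Rlt_dec b (1/2)); apply Rabs_def2 in Hs; lra. }
  assert (Hind : forall i, (i < S N)%nat -> f (a + i * n)%nat = f a + INR i * d).
  { induction i as [|i IH]; intros Hi.
    - simpl. rewrite Nat.add_0_r. lra.
    - replace (a + S i * n)%nat with ((a + i * n) + n)%nat by lia.
      rewrite Hstep.
      + rewrite IH by lia. rewrite S_INR. lra.
      + replace ((a + i * n) + n)%nat with (a + S i * n)%nat by lia.
        rewrite (Hap (S i) Hi), (Hap i) by lia. reflexivity. }
  pose proof (Hind N (Nat.lt_succ_diag_r N)) as HE.
  pose proof (Hsame _ _ (Hap N (Nat.lt_succ_diag_r N))) as Hs.
  rewrite HE in Hs. replace (f a + INR N * d - f a) with (INR N * d) in Hs by ring.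
  rewrite Rabs_mult, Rabs_right in Hs by (apply Rle_ge, pos_INR).
  assert (INR N * eps >= 1).
  { apply Rle_ge. apply Rmult_ge_compat_r with (r := eps) in HN; [|lra].
    rewrite Rinv_l in HN by lra. lra. }
  assert (INR N * Rabs d >= INR N * eps).
  { apply Rle_ge, Rmult_le_compat_l; [apply pos_INR | lra]. }
  lra.
Qed.
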